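(* Let $(G,\mathcal{C})$ be a 2-colored graph, $G=(V,E)$, and let $l,u:E\to\mathbb{N}$ satisfy $l(e)\le u(e)$ for all $e\in E$. If there exists a rational vector $x\in\mathcal{A}(G,\mathcal{C})$ with $l(e)\le x(e)\le u(e)$ for all $e\in E$, then there exists an integral vector $y\in\mathcal{A}(G,\mathcal{C})$ with $2l(e)\le y(e)\le 2u(e)$ for all $e\in E$.
   Context: Graphs are finite, undirected, may have parallel edges but no loops; $\mathcal{C}:E\to\{R,B\}$ is a red/blue edge coloring. The alternating cone $\mathcal{A}(G,\mathcal{C})\subseteq\mathbb{R}^E$ is the set of $x$ with $x(e)\ge0$ for all $e$ and, at every vertex $v$, the sum of $x(e)$ over red edges at $v$ equals the sum of $x(e)$ over blue edges at $v$. *)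

(* Defs.v *)
From mathcomp Require Import all_boot all_order all_algebra.
Set Implicit Arguments. Unset Strict Implicit. Unset Printing Implicit Defensive.
Import Order.TTheory GRing.Theory Num.Theory.
Local Open Scope ring_scope.

(* A multigraph without loops: vertex type V, edge type E (finite), each edge
   e has endpoints src e and dst e with src e != dst e (parallel edges allowed).
   A 2-coloring is col : E -> bool, with true = red (R), false = blue (B). *)

Definition incident (V E : finType) (src dst : E -> V) (v : V) (e : E) : bool :=
  (src e == v) || (dst e == v).

Definition in_alt_cone (R : numDomainType) (V E : finType) (src dst : E -> V)
  (col : E -> bool) (x : E -> R) : Prop :=
  (forall e, 0 <= x e) /\
  (forall v : V, \sum_(e | incident src dst v e && col e) x e
               = \sum_(e | incident src dst v e && ~~ col e) x e).

(* Main.v *)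
Require Import Defs.
From mathcomp Require Import all_boot all_order all_algebra zify lra.
Set Implicit Arguments. Unset Strict Implicit. Unset Printing Implicit Defensive.
Import Order.TTheory GRing.Theory Num.Theory.

Local Open Scope ring_scope.

Lemma kernel_ex (I J : finType) (a : I -> J -> rat) :
  (#|J| < #|I|)%N ->
  exists d : I -> rat, (exists i, d i != 0) /\
    forall j, \sum_i d i * a i j = 0.
Proof.
move=> hJI.
pose M : 'M[rat]_(#|I|, #|J|) := \matrix_(i, j) a (enum_val i) (enum_val j).
pose K := kermx M.
have : K != 0.
  rewrite -mxrank_eq0 mxrank_ker; have := rank_leq_col M; lia.
case/matrix0Pn => i0 [k0 hk].
exists (fun x => K i0 (enum_rank x)); split.
  by exists (enum_val k0); rewrite enum_valK.
move=> j.
have h0 : (K *m M) i0 (enum_rank j) = 0 by rewrite mulmx_ker mxE.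
rewrite mxE in h0; rewrite -[RHS]h0.
rewrite [LHS](reindex (@enum_val I (pred_of_argType I))) /=; last first.
  by exists enum_rank => x _; [rewrite enum_valK | rewrite enum_rankK].
apply: eq_bigr => k _; by rewrite enum_valK; congr (_ * _); rewrite mxE enum_rankK.

Qed.

Local Close Scope ring_scope.
Lemma count_TF (V' E' : finType) (p q : E' -> V') (F : {set E'})
  (hpq : forall e, p e != q e) (T : {set V'}) :
  (forall v, v \in T -> 2 <= #|[set e in F | (p e == v) || (q e == v)]|) ->
  #|T| <= #|F|.
Proof.
move=> hdeg.
have h1 : \sum_(v in T) 2 <= \sum_v #|[set e in F | (p e == v) || (q e == v)]|.
  apply: (@leq_trans (\sum_(v in T) #|[set e in F | (p e == v) || (q e == v)]|)); first exact: leq_sum.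
  by rewrite [X in _ <= X](bigID (mem T)) /= leq_addr.
have h2 : \sum_v #|[set e in F | (p e == v) || (q e == v)]| = \sum_(e in F) 2.
  transitivity (\sum_v \sum_e ((e \in F) && ((p e == v) || (q e == v))) : nat).
    apply: eq_bigr => v _; rewrite -sum1_card big_mkcond /=.
    by apply: eq_bigr => e _; rewrite inE; case: ifP.
  rewrite exchange_big /= [in RHS]big_mkcond /=; apply: eq_bigr => e _.
  case: (boolP (e \in F)) => heF /=; last by rewrite big1.
  rewrite (bigD1 (p e)) ?eqxx //= (bigD1 (q e)) ?eqxx ?orbT //=; last by rewrite eq_sym hpq.
  rewrite big1 // => v /andP [hv1 hv2].
  by rewrite eq_sym (negbTE hv1) eq_sym (negbTE hv2).
move: h1; rewrite h2 !sum_nat_const; lia.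
Qed.
Local Open Scope ring_scope.
Definition inc (V' E' : finType) (p q : E' -> V') (e : E') (v : V') : bool :=
  (p e == v) || (q e == v).

Definition feas (V' E' : finType) (p q : E' -> V') (c lo hi f : E' -> rat) :=
  (forall e, lo e <= f e <= hi e) /\
  (forall v, \sum_(e | inc p q e v) c e * f e = 0).

Lemma c_int (c : rat) : c = 1 \/ c = -1 -> c \is a Num.int.
Proof. by case=> ->; rewrite ?rpredN rpred1. Qed.

Lemma degree2 (V' E' : finType) (p q : E' -> V') (c lo hi f : E' -> rat)
  (hc : forall e, c e = 1 \/ c e = -1) :
  feas p q c lo hi f ->
  forall v e1, f e1 \notin Num.int -> inc p q e1 v ->
  [exists e2, [&& e2 != e1, f e2 \notin Num.int & inc p q e2 v]].
Proof.
move=> [_ hsum] v e1 he1 hinc.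
apply: contraT => /existsPn hno.
suff : f e1 \is a Num.int by rewrite (negbTE he1).
have := hsum v; rewrite (bigD1 e1) //= => /eqP; rewrite addr_eq0 => /eqP h.
have hi1 : c e1 * f e1 \is a Num.int.
  rewrite h rpredN; apply: rpred_sum => e /andP [hie hne].
  apply: rpredM; first exact: c_int.
  by have := hno e; rewrite hne hie /= andbT negbK.
have -> : f e1 = c e1 * (c e1 * f e1).
  by rewrite mulrA; case: (hc e1) => ->; rewrite ?mulrNN !mul1r.
by apply: rpredM => //; apply: c_int.
Qed.

Lemma sum_inc (V' E' : finType) (p q : E' -> V') (hpq : forall e, p e != q e)
  (e : E') (X : V' -> rat) :
  \sum_(v | inc p q e v) X v = X (p e) + X (q e).
Proof.
rewrite (bigD1 (p e)) /inc ?eqxx //= (bigD1 (q e)) ?eqxx ?orbT //=; last by rewrite eq_sym hpq.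
rewrite big1 ?addr0 // => v /andP [/andP [hinc hv1] hv2].
by move: hinc; rewrite /inc eq_sym (negbTE hv1) eq_sym (negbTE hv2).
Qed.

Lemma step (V' E' : finType) (p q : E' -> V') (sg : V' -> bool)
  (hsg : forall e, sg (p e) != sg (q e)) (c lo hi : E' -> rat)
  (hc : forall e, c e = 1 \/ c e = -1)
  (hlo : forall e, lo e \is a Num.int) (hhi : forall e, hi e \is a Num.int)
  (f : E' -> rat) (e1 : E') :
  feas p q c lo hi f -> f e1 \notin Num.int ->
  exists g, feas p q c lo hi g /\
    (#|[set e | g e \notin Num.int]| < #|[set e | f e \notin Num.int]|)%N.
Proof.
move=> hf he1.
have hpq e : p e != q e by apply/eqP => h; move: (hsg e); rewrite h eqxx.
pose F := [set e | f e \notin Num.int].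
have he1F : e1 \in F by rewrite inE.
pose T := [set v | [exists e, (e \in F) && inc p q e v]].
have hdeg : forall v, v \in T -> (2 <= #|[set e in F | (p e == v) || (q e == v)]|)%N.
  move=> v; rewrite inE => /existsP [e /andP [heF hinc]].
  have := degree2 hc hf; move: heF; rewrite inE => heF.
  move=> /(_ v e heF hinc) /existsP [e2 /and3P [hne he2 hinc2]].
  have hs : [set e2; e] \subset [set e in F | (p e == v) || (q e == v)].
    by apply/subsetP => x; rewrite !inE => /orP [] /eqP ->; apply/andP; split => //; rewrite inE.
  by have := subset_leq_card hs; rewrite cards2 hne.
have hTF := count_TF hpq hdeg.
have v0T : p e1 \in T by rewrite inE; apply/existsP; exists e1; rewrite he1F /inc eqxx.
pose J := T :\ p e1.
have hJ : (#|J| < #|F|)%N by move: hTF; rewrite (cardsD1 (p e1) T) v0T add1n.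
pose a (i : 'I_#|F|) (j : 'I_#|J|) :=
  if inc p q (enum_val i) (enum_val j) then c (enum_val i) else 0.
have hJ' : (#|{: 'I_#|J| }| < #|{: 'I_#|F| }|)%N by rewrite !card_ord.
have [d [[i0 hi0] hd]] := kernel_ex a hJ'.
pose D e := if e \in F then d (enum_rank_in he1F e) else 0.
have hDF : forall e, D e != 0 -> e \in F.
  by move=> e; rewrite /D; case: ifP => // _; rewrite eqxx.
have hDv : forall i, D (enum_val i) = d i.
  by move=> i; rewrite /D enum_valP enum_valK_in.
have hsumD : forall v, \sum_(e | inc p q e v) c e * D e =
    \sum_(i < #|F|) (if inc p q (enum_val i) v then c (enum_val i) else 0) * d i.
  move=> v; rewrite big_mkcond (bigID (mem F)) /= [X in _ + X]big1 ?addr0; last first.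
    move=> e heF; case: ifP => // _; rewrite /D (negbTE heF) mulr0 //.
  rewrite big_enum_val; apply: eq_bigr => i _; rewrite hDv; case: ifP => _ //.
  by rewrite mul0r.
have hJv : forall v, v \in J -> \sum_(e | inc p q e v) c e * D e = 0.
  move=> v hv; rewrite hsumD -[RHS](hd (enum_rank_in hv v)).
  apply: eq_bigr => i _; rewrite /a (enum_rankK_in hv hv) mulrC.
  by case: ifP.
have hnT : forall v, v \notin T -> \sum_(e | inc p q e v) c e * D e = 0.
  move=> v hv; apply: big1 => e hinc.
  case: (boolP (e \in F)) => heF; last by rewrite /D (negbTE heF) mulr0.
  by move: hv; rewrite inE; case/existsP; exists e; rewrite heF.
pose s v : rat := if sg v then 1 else -1.
have key : \sum_v s v * (\sum_(e | inc p q e v) c e * D e) = 0.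
  under eq_bigr do rewrite mulr_sumr big_mkcond /=.
  rewrite exchange_big /=; apply: big1 => e _.
  rewrite -big_mkcond /= sum_inc // /s.
  by move: (hsg e); case: (sg (p e)); case: (sg (q e)) => //= _; rewrite mulN1r mul1r ?subrr ?addNr.
have hall : forall v, \sum_(e | inc p q e v) c e * D e = 0.
  move=> v; case: (boolP (v \in T)) => hvT; last exact: hnT.
  case: (eqVneq v (p e1)) => hv; last by apply: hJv; rewrite in_setD1 hvT andbT.
  rewrite hv; move: key; rewrite (bigD1 (p e1)) //= [X in _ + X = _]big1 ?addr0; last first.
    move=> w hw; case: (boolP (w \in T)) => hwT; last by rewrite hnT ?mulr0.
    by rewrite hJv ?mulr0 // in_setD1 hwT andbT.
  move=> /eqP; rewrite mulf_eq0 => /orP [|/eqP //].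
  by rewrite /s; case: ifP => _; rewrite ?oppr_eq0 oner_eq0.
have [es hes] : exists es, D es != 0 by exists (enum_val i0); rewrite hDv.
pose S := [set e | D e != 0].
pose r e := if 0 < D e then (hi e - f e) / D e else (lo e - f e) / D e.
have hesS : es \in S by rewrite /S inE.
case: (arg_minP r hesS) => e0 he0S hmin.
have he0S' : D e0 != 0 by move: he0S; change (e0 \in S -> D e0 != 0); rewrite /S inE.
pose t := r e0.
have hlo' : forall e, lo e <= f e by move=> e; case/andP: (hf.1 e).
have hhi' : forall e, f e <= hi e by move=> e; case/andP: (hf.1 e).
have hr0 : forall e, 0 <= r e.
  move=> e; rewrite /r; case: ifP => hD.
    by apply: divr_ge0; [rewrite subr_ge0 | apply: ltW].
  by apply: mulr_le0; [rewrite subr_le0 | rewrite invr_le0 leNgt hD].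
have hrD : forall e, D e != 0 -> r e * D e = (if 0 < D e then hi e else lo e) - f e.
  by move=> e hD; rewrite /r; case: ifP => _; rewrite divfK.
have ht0 : 0 <= t by apply: hr0.
exists (fun e => f e + t * D e); split; [split|].
- move=> e; case: (ltrgtP (D e) 0) => hD.
  + have hre := hrD e (ltr0_neq0 hD); rewrite ltNge (ltW hD) /= in hre.
    have htr : t <= r e by apply: hmin; change (e \in S); rewrite /S inE (ltr0_neq0 hD).
    have h1 : r e * D e <= t * D e by apply: ler_wnM2r => //; apply: ltW.
    have h2 : t * D e <= 0 by apply: mulr_ge0_le0 => //; apply: ltW.
    move: h1 h2 (hhi' e); rewrite hre; set X := t * D e; move=> h1 h2 h3.
    apply/andP; split; lra.
  + have hre := hrD e (lt0r_neq0 hD); rewrite hD /= in hre.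
    have htr : t <= r e by apply: hmin; change (e \in S); rewrite /S inE (lt0r_neq0 hD).
    have h1 : t * D e <= r e * D e by apply: ler_wpM2r => //; apply: ltW.
    have h2 : 0 <= t * D e by apply: mulr_ge0 => //; apply: ltW.
    move: h1 h2 (hlo' e); rewrite hre; set X := t * D e; move=> h1 h2 h3.
    apply/andP; split; lra.
  + by rewrite hD mulr0 addr0; apply: hf.1.
- move=> v; under eq_bigr do rewrite mulrDr mulrCA.
  by rewrite big_split /= -mulr_sumr hall mulr0 addr0; apply: hf.2.
have he0F : e0 \in F by apply: hDF.
have hsub : [set e | f e + t * D e \notin Num.int] \subset F :\ e0.
  apply/subsetP => e; rewrite !inE => hg; apply/andP; split.
    apply/eqP => he; subst e; move: hg; rewrite /t.
    have hD0 := he0S'.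
    rewrite hrD // addrC subrK; case: ifP => _; by rewrite ?hhi ?hlo.
  apply: contra hg => hfe.
  have hD0 : D e = 0.
    apply/eqP; apply: contraT => hD; move: (hDF e hD); rewrite inE hfe //.
  by rewrite hD0 mulr0 addr0.
by rewrite (cardsD1 e0 F) he0F add1n ltnS; apply: subset_leq_card.
Qed.

Definition dcp (V E : finType) (src : E -> V) (e' : E * bool) : V * bool :=
  (src e'.1, e'.2).
Definition dcq (V E : finType) (dst : E -> V) (e' : E * bool) : V * bool :=
  (dst e'.1, ~~ e'.2).

Lemma cover_sum (V E : finType) (src dst : E -> V)
  (noloop : forall e, src e != dst e) (H : E * bool -> rat) (v : V) (j : bool) :
  \sum_(e' | inc (dcp src) (dcq dst) e' (v, j)) H e'
  = \sum_(e | incident src dst v e)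
       (if src e == v then H (e, j) else H (e, ~~ j)).
Proof.
rewrite big_mkcond [RHS]big_mkcond /=.
transitivity (\sum_e \sum_(i : bool) (if inc (dcp src) (dcq dst) (e, i) (v, j) then H (e, i) else 0)).
  by rewrite pair_bigA; apply: eq_bigr => -[e i] _.
apply: eq_bigr => e _; rewrite big_bool /inc /incident /dcp /dcq /= !xpair_eqE.
case: (eqVneq (src e) v) => hs; case: (eqVneq (dst e) v) => hd //=.
all: try by case: j; rewrite /= ?addr0 ?add0r.
- by move: (noloop e); rewrite hs hd eqxx.
Qed.

Lemma signed_split (V E : finType) (src dst : E -> V) (col : E -> bool)
  (h : E -> rat) (v : V) :
  \sum_(e | incident src dst v e) (if col e then 1 else -1) * h e =
  \sum_(e | incident src dst v e && col e) h e
  - \sum_(e | incident src dst v e && ~~ col e) h e.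
Proof.
rewrite (bigID col) /= -sumrN; congr (_ + _); apply: eq_bigr => e /andP [_ hc].
  by rewrite hc mul1r.
by rewrite (negbTE hc) mulN1r.
Qed.

Lemma core (V' E' : finType) (p q : E' -> V') (sg : V' -> bool)
  (hsg : forall e, sg (p e) != sg (q e)) (c lo hi : E' -> rat)
  (hc : forall e, c e = 1 \/ c e = -1)
  (hlo : forall e, lo e \is a Num.int) (hhi : forall e, hi e \is a Num.int)
  (f : E' -> rat) :
  feas p q c lo hi f ->
  exists g, feas p q c lo hi g /\ forall e, g e \is a Num.int.
Proof.
suff H : forall n (f : E' -> rat), (#|[set e | f e \notin Num.int]| <= n)%N ->
  feas p q c lo hi f -> exists g, feas p q c lo hi g /\ forall e, g e \is a Num.int.
  by apply: H.
elim=> [|n IH] f0 hn hf0.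
  exists f0; split => // e; apply: contraT => he.
  have h0 : (0 < #|[set e | f0 e \notin Num.int]|)%N by apply/card_gt0P; exists e; rewrite inE.
  by move: (leq_trans h0 hn).
case: (boolP [exists e, f0 e \notin Num.int]) => [/existsP [e1 he1]|/existsPn hall].
  have [g [hg hlt]] := step hsg hc hlo hhi hf0 he1.
  by apply: (IH g) => //; rewrite -ltnS; apply: leq_trans hlt hn.
by exists f0; split => // e; have := hall e; rewrite negbK.
Qed.

Unset Implicit Arguments.

Theorem theorem3p1 (V E : finType) (src dst : E -> V)
  (noloop : forall e, src e != dst e) (col : E -> bool) (l u : E -> nat)
  (hlu : forall e, (l e <= u e)%N) :
  (exists x : E -> rat, in_alt_cone src dst col x /\
     forall e, (l e)%:R <= x e <= (u e)%:R) ->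
  exists y : E -> int, in_alt_cone src dst col y /\
     forall e, (2 * l e)%:R <= y e <= (2 * u e)%:R.
Proof.
move=> [x [[hx0 hxv] hxb]].
have hsg : forall e, (dcp src e).2 != (dcq dst e).2 by move=> [e i]; case: i.
pose c := fun e' : E * bool => if col e'.1 then 1 else -1 : rat.
have hc : forall e, c e = 1 \/ c e = -1 by move=> e; rewrite /c; case: (col e.1); [left|right].
pose lo := fun e' : E * bool => ((l e'.1)%:R : rat).
pose hi := fun e' : E * bool => ((u e'.1)%:R : rat).
have hlo : forall e, lo e \is a Num.int by move=> e; apply: intr_nat; apply: natr_nat.
have hhi : forall e, hi e \is a Num.int by move=> e; apply: intr_nat; apply: natr_nat.
pose f := fun e' : E * bool => x e'.1.
have hf : feas (dcp src) (dcq dst) c lo hi f.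
  split; first by move=> [e i]; exact: hxb e.
  move=> [v j]; rewrite (cover_sum noloop (fun e' => c e' * f e')) /=.
  transitivity (\sum_(e | incident src dst v e) (if col e then 1 else -1) * x e).
    by apply: eq_bigr => e _; case: ifP.
  by rewrite signed_split hxv subrr.
have [g [[hgb hgv] hgi]] := core hsg hc hlo hhi hf.
pose y := fun e => Num.floor (g (e,true) + g (e,false)).
have hy : forall e, ((y e)%:~R : rat) = g (e,true) + g (e,false).
  by move=> e; apply/eqP; rewrite -intrEfloor; apply: rpredD; apply: hgi.
have hgT : forall e, (l e)%:R <= g (e, true) <= (u e)%:R by move=> e; apply: (hgb (e, true)).
have hgF : forall e, (l e)%:R <= g (e, false) <= (u e)%:R by move=> e; apply: (hgb (e, false)).
exists y; split; [split|].
- move=> e; rewrite -(ler0z rat) hy.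
  case/andP: (hgT e) => h1 _; case/andP: (hgF e) => h2 _.
  have h0 : (0 : rat) <= (l e)%:R by apply: ler0n.
  lra.
- move=> v; apply: (@intr_inj rat); rewrite !rmorph_sum /=.
  under eq_bigr do rewrite hy.
  under [RHS]eq_bigr do rewrite hy.
  apply/eqP; rewrite -subr_eq0 -signed_split; apply/eqP.
  have := congr2 (fun a b => a + b) (hgv (v, true)) (hgv (v, false)).
  rewrite /= !(cover_sum noloop) addr0 -big_split /= => hsum; rewrite -[RHS]hsum.
  apply: eq_bigr => e _; rewrite /c /=; case: ifP => _; rewrite mulrDr; case: ifP => _ //; by rewrite addrC.
- move=> e; rewrite -!(ler_int rat) hy.
  case/andP: (hgT e) => h1 h2; case/andP: (hgF e) => h3 h4.
  rewrite !rmorph_nat !natrM; apply/andP; split; lra.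
Qed.
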